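(* Let $\alpha,\beta,\sigma>0$ and let $X\sim\mathcal{N}(\alpha,\sigma^2)$. Then $$\mathbb{E}\left[\tanh'\left(\frac{\beta X}{\sigma^2}\right) X\right]\ge 0,$$ where $\tanh'$ denotes the derivative of the hyperbolic tangent. *)

(* Defs.v *)
From HB Require Import structures.
From mathcomp Require Import all_boot all_order all_algebra.
From mathcomp Require Import all_classical all_reals all_analysis.
Set Implicit Arguments. Unset Strict Implicit. Unset Printing Implicit Defensive.
Import Order.TTheory GRing.Theory Num.Theory.
Local Open Scope ring_scope.

Definition tanh {R : realType} (x : R) : R :=
  (expR x - expR (- x)) / (expR x + expR (- x)).

(* Main.v *)
Require Import Defs.
From HB Require Import structures.
From mathcomp Require Import all_boot all_order all_algebra.
From mathcomp Require Import all_classical all_reals all_analysis.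
From mathcomp Require Import lra ring measurable_realfun.
Import Order.TTheory GRing.Theory Num.Theory.
Local Open Scope ring_scope.
Local Open Scope ereal_scope.

Section Helpers.
Import numFieldNormedType.Exports.
Local Open Scope ring_scope.
Local Open Scope classical_set_scope.
Variable R : realType.
Local Notation mu := (@lebesgue_measure R).
Definition gg (y : R) : R := 4 / (expR y + expR (- y)) ^+ 2.
Definition cosh' (y : R) : R := expR y + expR (- y).

Lemma coshpos (y : R) : 0 < expR y + expR (- y).
Proof. by rewrite addr_gt0 ?expR_gt0. Qed.

Lemma cont_cosh : continuous cosh'.
Proof.
move=> x; apply: cvgD; first exact: continuous_expR.
apply: (continuous_comp (f := -%R) (g := expR)); last exact: continuous_expR.
exact: cvgN.
Qed.

Lemma cont_gg : continuous gg.
Proof.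
move=> x; apply: cvgM; first exact: cvg_cst.
apply: cvgV; first by rewrite expf_neq0 // gt_eqF // coshpos.
apply: (continuous_comp (f := cosh') (g := fun t => t ^+ 2)); first exact: cont_cosh.
exact: exprn_continuous.
Qed.

Lemma cosh_ge (y : R) : 1 + `|y| <= expR y + expR (- y).
Proof.
case: (leP 0 y) => y0.
  rewrite ger0_norm //; have := expR_ge1Dx y; have := expR_gt0 (- y); lra.
rewrite ltr0_norm //; have := expR_ge1Dx (- y); have := expR_gt0 y; lra.
Qed.

Lemma gg_ge0 y : 0 <= gg y.
Proof. by rewrite /gg divr_ge0 // exprn_ge0 // ltW // coshpos. Qed.

Lemma gg_even y : gg (- y) = gg y.
Proof. by rewrite /gg opprK addrC. Qed.

Lemma gg_bound y : `|gg y * y| <= 4.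
Proof.
rewrite normrM ger0_norm ?gg_ge0 // /gg.
have h1 := cosh_ge y; have := coshpos y.
move: (expR y + expR (- y)) h1 => s h1 s0.
rewrite mulrAC ler_pdivrMr ?exprn_gt0 //.
have ny := normr_ge0 y.

have ys : `|y| <= s by lra.
have s1 : 1 <= s by lra.
rewrite expr2; nra.
Qed.
Lemma dexpN (y : R) : is_derive y 1 (fun x => expR (- x)) (- expR (- y)).
Proof.
have := @is_derive1_comp R expR -%R y (expR (- y)) (-1) _ _.
by rewrite mulrN1; apply.
Qed.

Lemma dtanh (y : R) : derive1 (@tanh R) y = gg y.
Proof.
rewrite derive1E.
have hA : is_derive y 1 (fun x => expR x - expR (- x) : R) (expR y + expR (- y)).
  have := @is_deriveB _ _ _ expR (fun x => expR (- x)) y 1 _ _ (is_derive_expR y) (dexpN y).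
  by rewrite opprK.
have hC : is_derive y 1 (fun x => expR x + expR (- x) : R) (expR y - expR (- y)).
  exact: (@is_deriveD _ _ _ expR (fun x => expR (- x)) y 1 _ _ (is_derive_expR y) (dexpN y)).
have hV := @is_deriveV R (fun x => expR x + expR (- x)) y _ 1 (negbT (gt_eqF (coshpos y))) hC.
have hM := is_deriveM hA hV.
rewrite /tanh.
have -> : (fun x : R => (expR x - expR (- x)) / (expR x + expR (- x))) =
   ((fun x => expR x - expR (- x)) * (fun x => (expR x + expR (- x))^-1)) by [].
case: hM => _ ->; rewrite /gg.
set a := expR y; set b := expR (- y).
have ab : a * b = 1 by rewrite /a /b -expRD subrr expR0.
have c0 : a + b != 0 by rewrite gt_eqF // coshpos.
have sE : forall u v : R, u *: v = u * v by [].
rewrite /= !sE.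
transitivity (4 * (a * b) / (a + b) ^+ 2); last by rewrite ab mulr1.
by field.
Qed.

Lemma bounded_of (T : Type) (f : T -> R) (A : set T) (B : R) :
  (forall x, `|f x| <= B) -> [bounded f x | x in A].
Proof.
move=> fB; exists B; split; first exact: num_real.
by move=> M BM x _; apply: le_trans (fB x) (ltW BM).
Qed.

Local Open Scope ereal_scope.
Lemma integral_normal_prob (m s : R) (f : R -> \bar R) U : measurable U -> measurable_fun U f ->
  (\int[normal_prob m s]_(x in U) `|f x| < +oo)%E ->
  (\int[normal_prob m s]_(x in U) f x =
   \int[mu]_(x in U) (f x * (normal_pdf m s x)%:E))%E.
Proof.
move=> mU mf finf.
rewrite -(Radon_Nikodym_change_of_variables (normal_prob_dominates m s))//=; last first.
  by apply/integrableP; split.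
apply: ae_eq_integral => //.
- apply: emeasurable_funM => //; apply: (measurable_int mu).
  apply: (integrableS _ _ (@subsetT _ _)) => //=.
  by apply: Radon_Nikodym_integrable; exact: normal_prob_dominates.
- apply: emeasurable_funM => //=; apply/measurableT_comp => //=.
  by apply/measurable_funTS; exact: measurable_normal_pdf.
- apply: ae_eqe_mul2l => /=.
  rewrite Radon_NikodymE//=; first exact: normal_prob_dominates.
  move=> abmu.
  case: cid => /= h [h1 h2 h3].
  apply: integral_ae_eq => //=.
  + exact: integrableS h2.
  + by apply/measurable_funTS/measurableT_comp =>//; exact: measurable_normal_pdf.
  + by move=> E E01 mE; rewrite -h3.
Qed.
Lemma sym_nonneg (k : R -> R) : continuous k ->
  mu.-integrable setT (EFin \o k) ->
  (forall x, (0 <= x)%R -> (0 <= k x)%R) ->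
  (forall x, (x <= 0)%R -> (k x <= 0)%R) ->
  (forall x, (0 <= x)%R -> (- k (- x) <= k x)%R) ->
  0 <= \int[mu]_x (k x)%:E.
Proof.
move=> ck ik kp kn ksym.
have mk : measurable_fun setT k by exact: continuous_measurable_fun.
have mkE : forall A : set R, measurable_fun A (EFin \o k).
  by move=> A; apply/measurable_EFinP; exact: measurable_funTS.
have -> : [set: R] = `]-oo, 0%R] `|` `]0%R, +oo[.
  apply/seteqP; split => x //= _.
  by rewrite !in_itv /= andbT; case: (leP x 0%R) => _; [left|right].
rewrite integral_setU //; try exact: mkE; last first.
  apply/disj_setPS => x [] /=; rewrite !in_itv /= andbT => x0 x0'.
  by move: x0'; rewrite ltNge x0.
have -> : \int[mu]_(x in `]-oo, 0%R]) (k x)%:E =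
    - \int[mu]_(x in `]-oo, 0%R]) (- k x)%:E.
  rewrite -integral_ge0N; last first.
    by move=> x; rewrite /= in_itv /= => x0; rewrite lee_fin oppr_ge0 kn.
  by apply: eq_integral => x _; rewrite /= opprK.
have cNk : continuous (fun x => - k x)%R.
  by move=> x; apply: cvgN; exact: ck.
have sub := @ge0_integration_by_substitutionNy R (fun x => - k x)%R 0%R.
rewrite oppr0 in sub.
rewrite sub; last 2 first.
  by apply: continuous_subspaceT; exact: cNk.
  by move=> x; rewrite in_itv /= => x0; rewrite oppr_ge0 kn // ltW.
rewrite (@integral_itv_obnd_cbnd R 0%R); last first.
  by apply/measurable_EFinP; exact: measurable_funTS.
have fK : \int[mu]_(x in `[0%R, +oo[) (k x)%:E \is a fin_num.
  apply: integrable_fin_num; first exact: measurable_itv.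
  by apply: (integrableS measurableT).
rewrite addeC sube_ge0 ?fK ?orbT //.
apply: ge0_le_integral => //.
- by move=> x; rewrite /= in_itv /= andbT => x0; rewrite lee_fin oppr_ge0 kn // oppr_le0.
- apply/measurable_EFinP; apply: measurable_funTS.
  by apply: continuous_measurable_fun => x; apply: cvgN; apply: continuous_comp; [exact: cvgN|exact: ck].
- by apply/measurable_EFinP; exact: measurable_funTS.
- by move=> x; rewrite /= in_itv /= andbT => x0; rewrite lee_fin ksym.
Qed.

Local Open Scope ring_scope.
Definition hh (c x : R) := gg (c * x) * x.

Lemma hh_bound c x : 0 < c -> `|hh c x| <= 4 / c.
Proof.
move=> c0; rewrite ler_pdivlMr // -[X in (_ * X)%R](gtr0_norm c0) -normrM.
by rewrite /hh -mulrA (mulrC x) gg_bound.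
Qed.

Lemma hh_cont c : continuous (hh c).
Proof.
move=> x; apply: cvgM; last exact: cvg_id.
apply: (continuous_comp (f := fun x => c * x) (g := gg)); last exact: cont_gg.
by apply: cvgM; [exact: cvg_cst|exact: cvg_id].
Qed.

Lemma hh_meas c : measurable_fun setT (hh c).
Proof. exact: continuous_measurable_fun (hh_cont c). Qed.

Lemma normal_part alpha sigma c : 0 < alpha -> 0 < sigma -> 0 < c ->
  (0 <= \int[normal_prob alpha sigma]_x (hh c x)%:E)%E.
Proof.
move=> a0 s0 c0.
have s0' : sigma != 0 by rewrite gt_eqF.
have hbd : [bounded hh c x | x in [set: R]] by apply: bounded_of => x; exact: hh_bound.
have hint : (normal_prob alpha sigma).-integrable setT (EFin \o hh c).
  apply: measurable_bounded_integrable => //; last exact: hh_meas.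
  by apply: (le_lt_trans (probability_le1 (normal_prob alpha sigma) measurableT)); exact: ltry.
rewrite integral_normal_prob //; first last.
- by move/integrableP : hint => [_].
- by apply/measurable_EFinP; exact: hh_meas.
pose k x := hh c x * normal_pdf alpha sigma x.
have -> : (\int[mu]_(x in setT) ((hh c x)%:E * (normal_pdf alpha sigma x)%:E) = \int[mu]_x (k x)%:E)%E.
  by apply: eq_integral => x _; rewrite /k EFinM.
have hh0 x : 0 <= x -> 0 <= hh c x.
  by move=> x0; rewrite /hh mulr_ge0 // gg_ge0.
have hhN x : hh c (- x) = - hh c x.
  by rewrite /hh !mulrN gg_even.
have pdf_sym x : 0 <= x -> normal_pdf alpha sigma (- x) <= normal_pdf alpha sigma x.
  move=> x0; rewrite /normal_pdf (negbTE s0') ler_wpM2l ?normal_peak_ge0 //.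
  rewrite /normal_fun ler_expR !mulNr lerN2 ler_pM2r ?invr_gt0 ?mulrn_wgt0 ?exprn_gt0 //.
  nra.
apply: sym_nonneg.
- move=> x; apply: cvgM; first exact: hh_cont.
  exact: continuous_normal_pdf.
- have H := integrableMl measurableT (integrable_normal_pdf alpha sigma) (hh_meas c) hbd.
  apply: eq_integrable H => //= x _.
  by rewrite /k EFinM muleC.
- by move=> x x0; rewrite /k mulr_ge0 // ?hh0 // normal_pdf_ge0.
- move=> x x0; rewrite /k -[x]opprK hhN mulNr oppr_le0 mulr_ge0 // ?hh0 ?normal_pdf_ge0 //.
  by rewrite oppr_ge0.
- move=> x x0; rewrite /k hhN mulNr opprK ler_wpM2l // ?hh0 //.
  exact: pdf_sym.
Qed.

End Helpers.

Theorem lemma1 (R : realType) (alpha beta sigma : R)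
  (halpha : (0 < alpha)%R) (hbeta : (0 < beta)%R) (hsigma : (0 < sigma)%R)
  (d : measure_display) (T : measurableType d) (P : probability T R)
  (X : {RV P >-> R})
  (hX : distribution P X = normal_prob alpha sigma) :
  0 <= 'E_P[fun w => (derive1 (@tanh R) (beta * X w / sigma ^+ 2) * X w)%R].
Proof.
set c := (beta / sigma ^+ 2)%R.
have c0 : (0 < c)%R by rewrite divr_gt0 // exprn_gt0.
pose h := hh R c.
have hb : forall x, (`|h x| <= 4 / c)%R by move=> x; exact: hh_bound.
have mh : measurable_fun setT h by exact: hh_meas.
have -> : 'E_P[fun w => (derive1 (@tanh R) (beta * X w / sigma ^+ 2) * X w)%R] =
    \int[P]_w ((EFin \o h) (X w)).
  rewrite unlock; apply: eq_integral => w _.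
  rewrite /= dtanh /h /hh /c; congr (_%:E); congr (_ * _)%R; congr (gg R _); by rewrite mulrAC.
have mhX : measurable_fun setT (h \o X).
  by apply: measurableT_comp => //; exact: measurable_funPT.
have mX' : measurable_fun setT (X : T -> measurableTypeR R).
  exact: (measurable_funPT X).
have intf : P.-integrable (X @^-1` setT) ((EFin \o h) \o X).
  rewrite preimage_setT.
  apply: (measurable_bounded_integrable _ _ mhX) => //.
    by apply: (le_lt_trans (probability_le1 P measurableT)); exact: ltry.
  exact: bounded_of (fun w => hb (X w)).
have mf : measurable_fun setT (EFin \o hh R c : measurableTypeR R -> \bar R).
  by apply/measurable_EFinP; exact: hh_meas.
have H := @integral_pushforward d _ T (measurableTypeR R) R (X : T -> measurableTypeR R) mX' P setT (EFin \o hh R c) mf intf measurableT.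
rewrite preimage_setT in H.
have E : pushforward P (X : T -> measurableTypeR R) = normal_prob alpha sigma := hX.
rewrite -H E.
exact: (@normal_part R alpha sigma c halpha hsigma c0).
Qed.
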